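(* Let $A_1A_2A_3$ and $B_1B_2B_3$ be triangles in the real projective plane that are perspective from a point $S$, i.e. the three lines $A_1B_1$, $A_2B_2$, $A_3B_3$ pass through $S$. For every permutation $(i,j,k)$ of $(1,2,3)$ let $P_{ij}$ be the intersection point of the lines $A_iA_k$ and $B_jB_k$, and let $C_k$ be the intersection point of the lines $P_{ik}P_{ki}$ and $P_{jk}P_{kj}$. (The configuration is assumed to be in general position, so that all these points and lines are well defined.) Then the triangle $C_1C_2C_3$ is perspective from the point $S$ to the triangle $A_1A_2A_3$ and to the triangle $B_1B_2B_3$; that is, for each $k\in\{1,2,3\}$ the points $S$, $A_k$, $B_k$, $C_k$ are collinear.
   Context: Two configurations with a correspondence between their points are said to be perspective from a point $O$ if all lines joining corresponding points pass through $O$. *)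

(* Defs.v *)
From HB Require Import structures.
From mathcomp Require Import all_boot all_order all_algebra.
From mathcomp Require Import reals.
Set Implicit Arguments. Unset Strict Implicit. Unset Printing Implicit Defensive.
Import Order.TTheory GRing.Theory Num.Theory.
Local Open Scope ring_scope.

(* Real projective plane via homogeneous coordinates: a point (or a line) is a
   nonzero vector of R^3, taken up to a nonzero scalar. *)
Definition vec3 (R : Type) := (R * R * R)%type.

Section Proj.
Variable R : nzRingType.

Definition v0 : vec3 R := (0, 0, 0).
Definition dot (p q : vec3 R) : R :=
  let: (p1, p2, p3) := p in let: (q1, q2, q3) := q in p1 * q1 + p2 * q2 + p3 * q3.
Definition cross (p q : vec3 R) : vec3 R :=
  let: (p1, p2, p3) := p in let: (q1, q2, q3) := q in
  (p2 * q3 - p3 * q2, p3 * q1 - p1 * q3, p1 * q2 - p2 * q1).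

Definition proj_pt (p : vec3 R) : Prop := p != v0.
Definition distinct (p q : vec3 R) : Prop := cross p q != v0.
Definition join (p q : vec3 R) : vec3 R := cross p q.
Definition meet (l m : vec3 R) : vec3 R := cross l m.
Definition incident (p l : vec3 R) : Prop := dot p l = 0.
Definition collinear (ps : seq (vec3 R)) : Prop :=
  exists l : vec3 R, l != v0 /\ forall p, p \in ps -> incident p l.

(* the third index k of a permutation (i,j,k) of (0,1,2) *)
Definition third (i j : 'I_3) : 'I_3 := inord (3 - i - j).

Definition Ppt (A B : 'I_3 -> vec3 R) (i j : 'I_3) : vec3 R :=
  meet (join (A i) (A (third i j))) (join (B j) (B (third i j))).

Definition Cpt (A B : 'I_3 -> vec3 R) (k : 'I_3) : vec3 R :=
  let i : 'I_3 := inord ((k + 1) %% 3) in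
  let j : 'I_3 := inord ((k + 2) %% 3) in
  meet (join (Ppt A B i k) (Ppt A B k i)) (join (Ppt A B j k) (Ppt A B k j)).

Definition triangle (A : 'I_3 -> vec3 R) : Prop :=
  (forall i, proj_pt (A i)) /\ ~ collinear [:: A 0; A 1; A 2].

End Proj.

(* Main.v *)
Require Import Defs.
From HB Require Import structures.
From mathcomp Require Import all_boot all_order all_algebra.
From mathcomp Require Import reals.
From mathcomp Require Import ring.
Import Order.TTheory GRing.Theory Num.Theory.
Local Open Scope ring_scope.

Section Aux.
Variable R : realType.
Implicit Types a b c d p q r s : vec3 R.

Definition det3 p q r := dot (cross p q) r.

Ltac dv := repeat match goal with
  | v : vec3 _ |- _ => let x := fresh "x" in let y := fresh "y" in
      let z := fresh "z" in move: v => [[x y] z] end.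

Lemma binet a b c d :
  dot (cross a b) (cross c d) = dot a c * dot b d - dot a d * dot b c.
Proof. dv; rewrite /dot /cross /=. idtac. ring. Qed.

Lemma LA ai aj ak bi bj bk :
  dot (cross (cross (cross ai aj) (cross bk bj)) (cross (cross ak aj) (cross bi bj))) ak
  = - (det3 ak bi bj * det3 aj bk bj * det3 ai aj ak).
Proof. dv; rewrite /det3 /dot /cross /=; ring. Qed.

Lemma LB ai aj ak bi bj bk :
  dot (cross (cross (cross ai aj) (cross bk bj)) (cross (cross ak aj) (cross bi bj))) bk
  = - (det3 ai aj bk * det3 ak aj bj * det3 bj bi bk).
Proof. dv; rewrite /det3 /dot /cross /=; ring. Qed.

Lemma detL ai aj ak bi bj bk :
  det3 (cross ai bi) (cross aj bj) (cross ak bk) =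
  - (det3 aj bk bj * det3 ak ai bi - det3 ak aj bj * det3 ai bk bi).
Proof. dv; rewrite /det3 /dot /cross /=; ring. Qed.

Lemma det_sym3 p q r : det3 q p r = - det3 p q r.
Proof. dv; rewrite /det3 /dot /cross /=; ring. Qed.

Lemma det_sw23 p q r : det3 p r q = - det3 p q r.
Proof. dv; rewrite /det3 /dot /cross /=; ring. Qed.

Lemma det_cyc p q r : det3 q r p = det3 p q r.
Proof. dv; rewrite /det3 /dot /cross /=; ring. Qed.

Lemma mainC ai aj ak bi bj bk :
  let Pik := cross (cross ai aj) (cross bk bj) in
  let Pki := cross (cross ak aj) (cross bi bj) in
  let Pjk := cross (cross aj ai) (cross bk bi) in
  let Pkj := cross (cross ak ai) (cross bj bi) in
  dot (cross (cross Pik Pki) (cross Pjk Pkj)) (cross ak bk) =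
  det3 ak bi bj * det3 ai aj ak * det3 ai aj bk * det3 bi bj bk *
  det3 (cross ai bi) (cross aj bj) (cross ak bk).
Proof.
move=> Pik Pki Pjk Pkj.
rewrite binet /Pik /Pki /Pjk /Pkj !LA !LB detL.
rewrite (det_sw23 ak bi bj) (det_sym3 ai aj ak) (det_sym3 ai aj bk) (det_sym3 bi bj bk).
ring.
Qed.

Lemma detS s l1 l2 l3 : s != v0 R -> dot s l1 = 0 -> dot s l2 = 0 -> dot s l3 = 0 ->
  det3 l1 l2 l3 = 0.
Proof.
move: s l1 l2 l3 => [[s1 s2] s3] [[a1 a2] a3] [[b1 b2] b3] [[c1 c2] c3].
rewrite /dot /det3 /cross /v0 /= => hs h1 h2 h3.
set D := (_ + _ + _).
have e1 : D * s1 = 0.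
  have -> : D * s1 = (s1*a1+s2*a2+s3*a3) * (b2*c3-b3*c2) + (s1*b1+s2*b2+s3*b3) * (c2*a3-c3*a2)
     + (s1*c1+s2*c2+s3*c3) * (a2*b3-a3*b2) by rewrite /D; ring.
  by rewrite h1 h2 h3; ring.
have e2 : D * s2 = 0.
  have -> : D * s2 = (s1*a1+s2*a2+s3*a3) * (b3*c1-b1*c3) + (s1*b1+s2*b2+s3*b3) * (c3*a1-c1*a3)
     + (s1*c1+s2*c2+s3*c3) * (a3*b1-a1*b3) by rewrite /D; ring.
  by rewrite h1 h2 h3; ring.
have e3 : D * s3 = 0.
  have -> : D * s3 = (s1*a1+s2*a2+s3*a3) * (b1*c2-b2*c1) + (s1*b1+s2*b2+s3*b3) * (c1*a2-c2*a1)
     + (s1*c1+s2*c2+s3*c3) * (a1*b2-a2*b1) by rewrite /D; ring.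
  by rewrite h1 h2 h3; ring.
apply/eqP; apply/negPn/negP => hD.
move/eqP: e1; rewrite mulf_eq0 (negbTE hD) /= => /eqP e1.
move/eqP: e2; rewrite mulf_eq0 (negbTE hD) /= => /eqP e2.
move/eqP: e3; rewrite mulf_eq0 (negbTE hD) /= => /eqP e3.
by move: hs; rewrite e1 e2 e3 eqxx.
Qed.

End Aux.

Lemma mainC' (R : realType) (S ai aj ak bi bj bk : vec3 R) :
  S != v0 R -> dot S (cross ai bi) = 0 -> dot S (cross aj bj) = 0 -> dot S (cross ak bk) = 0 ->
  dot (cross (cross (cross (cross ai aj) (cross bk bj)) (cross (cross ak aj) (cross bi bj)))
             (cross (cross (cross aj ai) (cross bk bi)) (cross (cross ak ai) (cross bj bi))))
      (cross ak bk) = 0.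
Proof.
move=> hS h1 h2 h3.
by rewrite (@mainC R ai aj ak bi bj bk) (@detS R _ _ _ _ hS h1 h2 h3) mulr0.
Qed.

Theorem theorem1 (R : realType) (S : vec3 R) (A B : 'I_3 -> vec3 R) :
  proj_pt S ->
  triangle A -> triangle B ->
  (* perspective from S: the lines A_i B_i are defined and pass through S *)
  (forall i, distinct (A i) (B i)) ->
  (forall i, incident S (join (A i) (B i))) ->
  (* general position: every P_ij is well defined *)
  (forall i j : 'I_3, i != j ->
     distinct (join (A i) (A (third i j))) (join (B j) (B (third i j)))) ->
  (* general position: the lines P_ik P_ki are well defined *)
  (forall i k : 'I_3, i != k -> distinct (Ppt A B i k) (Ppt A B k i)) ->
  (* general position: every C_k is well defined *)
  (forall i j k : 'I_3, i != j -> j != k -> i != k ->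
     distinct (join (Ppt A B i k) (Ppt A B k i)) (join (Ppt A B j k) (Ppt A B k j))) ->
  forall k : 'I_3, collinear [:: S; A k; B k; Cpt A B k].
Proof.
move=> hS _ _ hd hinc _ _ _ k.
exists (cross (A k) (B k)); split; first exact: hd.
have inc : forall i, dot S (cross (A i) (B i)) = 0 by move=> i; exact: hinc.
move=> p; rewrite !inE => /or4P [] /eqP ->.
- exact: inc.
- by rewrite /incident; case: (A k) (B k) => [[? ?] ?] [[? ?] ?]; rewrite /dot /cross /=; ring.
- by rewrite /incident; case: (A k) (B k) => [[? ?] ?] [[? ?] ?]; rewrite /dot /cross /=; ring.
rewrite /incident.
have e : forall (n : nat) (H : (n < 3)%N), (inord n : 'I_3) = Ordinal H.
  by move=> n H; apply/val_inj; rewrite /= inordK.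
case: k => [[|[|[|m]]] Hk] //; rewrite (bool_irrelevance Hk isT) /Cpt /Ppt /third /meet /join /=;
repeat match goal with |- context[@inord 2 ?n] =>
  match n with context [@inord] => fail 1 | _ => idtac end;
  let v := eval compute in n in
  let E := fresh "E" in
  assert (E : (@inord 2 n) = Ordinal (isT : (v < 3)%N)) by (apply/val_inj; rewrite /= inordK //);
  rewrite E; clear E end;
apply: (@mainC' R S); first [exact: hS | exact (inc _)].
Qed.
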